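(* Let $(A,B)$ be an imprecise copula. Then $(A,A_M)$ and $(B_O,B)$ are imprecise copulas, and $A\le A_M\le B$ and $A\le B_O\le B$; i.e. there is an imprecise copula contained in $(A,B)$ with the same lower bound and one with the same upper bound.
   Context: Quasi-copula: $Q:[0,1]^2\to\mathbb{R}$ grounded, with neutral element $1$, with $V_Q(R)\ge0$ for each rectangle having a side on the boundary of $[0,1]^2$, where $V_Q([s_1,s_2]\times[t_1,t_2])=Q(s_1,t_1)+Q(s_2,t_2)-Q(s_2,t_1)-Q(s_1,t_2)$. Defects: $\mathcal{R}_\nearrow(\mathbf{x}),\mathcal{R}_\swarrow(\mathbf{x}),\mathcal{R}_\nwarrow(\mathbf{x}),\mathcal{R}_\searrow(\mathbf{x})$ are the sets of (possibly degenerate) rectangles in $[0,1]^2$ with $\mathbf{x}$ as southwest, northeast, southeast, northwest corner; $D^Q_\bullet(\mathbf{x})=\inf\{V_Q(R):R\in\mathcal{R}_\bullet(\mathbf{x})\}$; $D^Q_M=\min(D^Q_\nearrow,D^Q_\swarrow)$, $D^Q_O=\min(D^Q_\nwarrow,D^Q_\searrow)$; $Q_M=Q-D^Q_M$, $Q_O=Q+D^Q_O$. Imprecise copula: a pair $(A,B)$ of grounded functions with neutral element 1 satisfying, for all rectangles with SW, SE, NE, NW corners $\mathbf{a},\mathbf{b},\mathbf{c},\mathbf{d}$: $A(\mathbf{a})+B(\mathbf{c})-A(\mathbf{b})-A(\mathbf{d})\ge0$, $B(\mathbf{a})+A(\mathbf{c})-A(\mathbf{b})-A(\mathbf{d})\ge0$,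 $B(\mathbf{a})+B(\mathbf{c})-B(\mathbf{b})-A(\mathbf{d})\ge0$, $B(\mathbf{a})+B(\mathbf{c})-A(\mathbf{b})-B(\mathbf{d})\ge0$. In an imprecise copula $A,B$ are quasi-copulas with $A\le B$. *)

(* Defs.v *)
From Stdlib Require Import Reals Lra ClassicalEpsilon.
Open Scope R_scope.

(* Functions on the unit square are represented as R -> R -> R;
   only their values on [0,1]^2 matter. *)
Definition I01 (x : R) : Prop := 0 <= x <= 1.

Definition Vol (Q : R -> R -> R) (s1 s2 t1 t2 : R) : R :=
  Q s1 t1 + Q s2 t2 - Q s2 t1 - Q s1 t2.

Definition rect (s1 s2 t1 t2 : R) : Prop :=
  0 <= s1 /\ s1 <= s2 /\ s2 <= 1 /\ 0 <= t1 /\ t1 <= t2 /\ t2 <= 1.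

Definition grounded (Q : R -> R -> R) : Prop :=
  (forall s, I01 s -> Q s 0 = 0) /\ (forall t, I01 t -> Q 0 t = 0).

Definition neutral1 (Q : R -> R -> R) : Prop :=
  (forall s, I01 s -> Q s 1 = s) /\ (forall t, I01 t -> Q 1 t = t).

(* Infimum of a set of reals, via classical choice of a greatest lower bound
   (defects of quasi-copulas are infima of bounded nonempty sets). *)
Definition is_glb (S : R -> Prop) (m : R) : Prop :=
  (forall x, S x -> m <= x) /\ (forall b, (forall x, S x -> b <= x) -> b <= m).

Definition Rinf (S : R -> Prop) : R :=
  epsilon (inhabits 0) (fun m => is_glb S m).

Definition vols_NE (Q : R -> R -> R) (a b : R) : R -> Prop :=
  fun v => exists s2 t2, rect a s2 b t2 /\ v = Vol Q a s2 b t2.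
Definition vols_SW (Q : R -> R -> R) (a b : R) : R -> Prop :=
  fun v => exists s1 t1, rect s1 a t1 b /\ v = Vol Q s1 a t1 b.
Definition vols_NW (Q : R -> R -> R) (a b : R) : R -> Prop :=
  fun v => exists s1 t2, rect s1 a b t2 /\ v = Vol Q s1 a b t2.
Definition vols_SE (Q : R -> R -> R) (a b : R) : R -> Prop :=
  fun v => exists s2 t1, rect a s2 t1 b /\ v = Vol Q a s2 t1 b.

Definition D_NE Q a b := Rinf (vols_NE Q a b).
Definition D_SW Q a b := Rinf (vols_SW Q a b).
Definition D_NW Q a b := Rinf (vols_NW Q a b).
Definition D_SE Q a b := Rinf (vols_SE Q a b).

Definition D_M (Q : R -> R -> R) (a b : R) : R := Rmin (D_NE Q a b) (D_SW Q a b).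
Definition D_O (Q : R -> R -> R) (a b : R) : R := Rmin (D_NW Q a b) (D_SE Q a b).

Definition Q_M (Q : R -> R -> R) : R -> R -> R := fun a b => Q a b - D_M Q a b.
Definition Q_O (Q : R -> R -> R) : R -> R -> R := fun a b => Q a b + D_O Q a b.

(* Imprecise copula; rectangle [s1,s2]x[t1,t2] with corners
   a = (s1,t1) SW, b = (s2,t1) SE, c = (s2,t2) NE, d = (s1,t2) NW. *)
Definition imprecise_copula (A B : R -> R -> R) : Prop :=
  grounded A /\ neutral1 A /\ grounded B /\ neutral1 B /\
  forall s1 s2 t1 t2, rect s1 s2 t1 t2 ->
    A s1 t1 + B s2 t2 - A s2 t1 - A s1 t2 >= 0 /\
    B s1 t1 + A s2 t2 - A s2 t1 - A s1 t2 >= 0 /\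
    B s1 t1 + B s2 t2 - B s2 t1 - A s1 t2 >= 0 /\
    B s1 t1 + B s2 t2 - A s2 t1 - B s1 t2 >= 0.

Definition leQ (F G : R -> R -> R) : Prop :=
  forall s t, I01 s -> I01 t -> F s t <= G s t.

(* Main.v *)
Require Import Defs.
From Stdlib Require Import Reals.
From Stdlib Require Import Lra ClassicalEpsilon.
Open Scope R_scope.

Lemma glb_ok (S : R -> Prop) (L : R) : S 0 -> (forall x, S x -> L <= x) -> is_glb S (Rinf S).
Proof.
  intros H0 HL. unfold Rinf. apply epsilon_spec.
  destruct (completeness (fun y => S (- y))) as [m [Hm1 Hm2]].
  - exists (- L). intros y Hy. specialize (HL _ Hy). lra.
  - exists 0. rewrite Ropp_0. exact H0.
  - exists (- m). split.
    + intros x Hx. assert (m >= - x). { apply Rle_ge, Hm1. rewrite Ropp_involutive. exact Hx. } lra.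
    + intros b Hb. assert (m <= - b). { apply Hm2. intros y Hy. specialize (Hb _ Hy). lra. } lra.
Qed.

Ltac rl := unfold rect, I01 in *; lra.

Section S.
Variables A B : R -> R -> R.
Hypothesis H : imprecise_copula A B.

Lemma glb_NE a b : I01 a -> I01 b -> is_glb (vols_NE A a b) (D_NE A a b).
Proof.
  intros ha hb. apply (glb_ok _ (A a b - B a b)).
  - exists a, b. split; [rl|unfold Vol; ring].
  - intros x [s2 [t2 [Hr ->]]]. destruct H as (_&_&_&_&Hc).
    destruct (Hc _ _ _ _ Hr) as (c1&c2&c3&c4). unfold Vol. lra.
Qed.
Lemma glb_SW a b : I01 a -> I01 b -> is_glb (vols_SW A a b) (D_SW A a b).
Proof.
  intros ha hb. apply (glb_ok _ (A a b - B a b)).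
  - exists a, b. split; [rl|unfold Vol; ring].
  - intros x [s2 [t2 [Hr ->]]]. destruct H as (_&_&_&_&Hc).
    destruct (Hc _ _ _ _ Hr) as (c1&c2&c3&c4). unfold Vol. lra.
Qed.
Lemma glb_NW a b : I01 a -> I01 b -> is_glb (vols_NW B a b) (D_NW B a b).
Proof.
  intros ha hb. apply (glb_ok _ (A a b - B a b)).
  - exists a, b. split; [rl|unfold Vol; ring].
  - intros x [s2 [t2 [Hr ->]]]. destruct H as (_&_&_&_&Hc).
    destruct (Hc _ _ _ _ Hr) as (c1&c2&c3&c4). unfold Vol. lra.
Qed.
Lemma glb_SE a b : I01 a -> I01 b -> is_glb (vols_SE B a b) (D_SE B a b).
Proof.
  intros ha hb. apply (glb_ok _ (A a b - B a b)).
  - exists a, b. split; [rl|unfold Vol; ring].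
  - intros x [s2 [t2 [Hr ->]]]. destruct H as (_&_&_&_&Hc).
    destruct (Hc _ _ _ _ Hr) as (c1&c2&c3&c4). unfold Vol. lra.
Qed.

Lemma DM_NE a b s2 t2 : rect a s2 b t2 -> D_M A a b <= Vol A a s2 b t2.
Proof.
  intros Hr. unfold D_M. eapply Rle_trans; [apply Rmin_l|].
  destruct (glb_NE a b ltac:(rl) ltac:(rl)) as [h _]. apply h. exists s2, t2. auto.
Qed.
Lemma DM_SW a b s1 t1 : rect s1 a t1 b -> D_M A a b <= Vol A s1 a t1 b.
Proof.
  intros Hr. unfold D_M. eapply Rle_trans; [apply Rmin_r|].
  destruct (glb_SW a b ltac:(rl) ltac:(rl)) as [h _]. apply h. exists s1, t1. auto.
Qed.
Lemma DM_ge a b c : I01 a -> I01 b ->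
  (forall s2 t2, rect a s2 b t2 -> c <= Vol A a s2 b t2) ->
  (forall s1 t1, rect s1 a t1 b -> c <= Vol A s1 a t1 b) -> c <= D_M A a b.
Proof.
  intros ha hb h1 h2. unfold D_M. apply Rmin_glb.
  - destruct (glb_NE a b ha hb) as [_ h]. apply h. intros x [s2 [t2 [Hr ->]]]. auto.
  - destruct (glb_SW a b ha hb) as [_ h]. apply h. intros x [s2 [t2 [Hr ->]]]. auto.
Qed.
Lemma DO_NW a b s1 t2 : rect s1 a b t2 -> D_O B a b <= Vol B s1 a b t2.
Proof.
  intros Hr. unfold D_O. eapply Rle_trans; [apply Rmin_l|].
  destruct (glb_NW a b ltac:(rl) ltac:(rl)) as [h _]. apply h. exists s1, t2. auto.
Qed.
Lemma DO_SE a b s2 t1 : rect a s2 t1 b -> D_O B a b <= Vol B a s2 t1 b.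
Proof.
  intros Hr. unfold D_O. eapply Rle_trans; [apply Rmin_r|].
  destruct (glb_SE a b ltac:(rl) ltac:(rl)) as [h _]. apply h. exists s2, t1. auto.
Qed.
Lemma DO_ge a b c : I01 a -> I01 b ->
  (forall s1 t2, rect s1 a b t2 -> c <= Vol B s1 a b t2) ->
  (forall s2 t1, rect a s2 t1 b -> c <= Vol B a s2 t1 b) -> c <= D_O B a b.
Proof.
  intros ha hb h1 h2. unfold D_O. apply Rmin_glb.
  - destruct (glb_NW a b ha hb) as [_ h]. apply h. intros x [s2 [t2 [Hr ->]]]. auto.
  - destruct (glb_SE a b ha hb) as [_ h]. apply h. intros x [s2 [t2 [Hr ->]]]. auto.
Qed.

Lemma DM_le0 a b : I01 a -> I01 b -> D_M A a b <= 0.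
Proof. intros. replace 0 with (Vol A a a b b) by (unfold Vol; ring). apply DM_NE. rl. Qed.
Lemma DO_le0 a b : I01 a -> I01 b -> D_O B a b <= 0.
Proof. intros. replace 0 with (Vol B a a b b) by (unfold Vol; ring). apply DO_NW. rl. Qed.
Lemma DM_geAB a b : I01 a -> I01 b -> A a b - B a b <= D_M A a b.
Proof.
  intros ha hb. destruct H as (_&_&_&_&Hc). apply DM_ge; auto; intros x y Hr;
  destruct (Hc _ _ _ _ Hr) as (c1&c2&c3&c4); unfold Vol; lra.
Qed.
Lemma DO_geAB a b : I01 a -> I01 b -> A a b - B a b <= D_O B a b.
Proof.
  intros ha hb. destruct H as (_&_&_&_&Hc). apply DO_ge; auto; intros x y Hr;
  destruct (Hc _ _ _ _ Hr) as (c1&c2&c3&c4); unfold Vol; lra.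
Qed.


Ltac fixv gA1 gA2 nA1 nA2 gB1 gB2 nB1 nB2 :=
  repeat match goal with
  | h : context [A ?x 0] |- _ => rewrite (gA1 x ltac:(rl)) in h
  | h : context [A 0 ?x] |- _ => rewrite (gA2 x ltac:(rl)) in h
  | h : context [A ?x 1] |- _ => rewrite (nA1 x ltac:(rl)) in h
  | h : context [A 1 ?x] |- _ => rewrite (nA2 x ltac:(rl)) in h
  | h : context [B ?x 0] |- _ => rewrite (gB1 x ltac:(rl)) in h
  | h : context [B 0 ?x] |- _ => rewrite (gB2 x ltac:(rl)) in h
  | h : context [B ?x 1] |- _ => rewrite (nB1 x ltac:(rl)) in h
  | h : context [B 1 ?x] |- _ => rewrite (nB2 x ltac:(rl)) in h
  | |- context [A ?x 0] => rewrite (gA1 x ltac:(rl))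
  | |- context [A 0 ?x] => rewrite (gA2 x ltac:(rl))
  | |- context [A ?x 1] => rewrite (nA1 x ltac:(rl))
  | |- context [A 1 ?x] => rewrite (nA2 x ltac:(rl))
  | |- context [B ?x 0] => rewrite (gB1 x ltac:(rl))
  | |- context [B 0 ?x] => rewrite (gB2 x ltac:(rl))
  | |- context [B ?x 1] => rewrite (nB1 x ltac:(rl))
  | |- context [B 1 ?x] => rewrite (nB2 x ltac:(rl))
  end.

Lemma bnd s : I01 s ->
  D_M A s 0 = 0 /\ D_M A 0 s = 0 /\ D_M A s 1 = 0 /\ D_M A 1 s = 0 /\
  D_O B s 0 = 0 /\ D_O B 0 s = 0 /\ D_O B s 1 = 0 /\ D_O B 1 s = 0.
Proof.
  intros hs. pose proof H as H'.
  destruct H' as ([gA1 gA2]&[nA1 nA2]&[gB1 gB2]&[nB1 nB2]&Hc).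
  repeat split; apply Rle_antisym;
  first [ apply DM_le0; rl | apply DO_le0; rl | apply DM_ge; [rl|rl| |] | apply DO_ge; [rl|rl| |] ];
  intros x y Hr; destruct (Hc _ _ _ _ Hr) as (c1&c2&c3&c4); unfold Vol;
  fixv gA1 gA2 nA1 nA2 gB1 gB2 nB1 nB2;
  first [ lra
        | assert (x = 0) by rl; subst; lra
        | assert (y = 0) by rl; subst; lra
        | assert (x = 1) by rl; subst; lra
        | assert (y = 1) by rl; subst; lra
        | assert (x = s) by rl; subst; lra
        | assert (y = s) by rl; subst; lra ].
Qed.
End S.

Theorem mainTheorem8 (A B : R -> R -> R) :
  imprecise_copula A B ->
  imprecise_copula A (Q_M A) /\ imprecise_copula (Q_O B) B /\
  leQ A (Q_M A) /\ leQ (Q_M A) B /\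
  leQ A (Q_O B) /\ leQ (Q_O B) B.
Proof.
  intros H. pose proof H as H'.
  destruct H' as ([gA1 gA2]&[nA1 nA2]&[gB1 gB2]&[nB1 nB2]&Hc).
  assert (NE := DM_NE A B H). assert (SW := DM_SW A B H).
  assert (NW := DO_NW A B H). assert (SE := DO_SE A B H).
  unfold Q_M, Q_O.
  repeat split.
  - intros s hs. rewrite gA1 by auto. reflexivity.
  - intros s hs. rewrite gA2 by auto. reflexivity.
  - intros s hs. rewrite nA1 by auto. reflexivity.
  - intros s hs. rewrite nA2 by auto. reflexivity.
  - intros s hs. destruct (bnd A B H s hs) as (b1&b2&b3&b4&_). rewrite gA1, b1 by auto. ring.
  - intros s hs. destruct (bnd A B H s hs) as (b1&b2&b3&b4&_). rewrite gA2, b2 by auto. ring.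
  - intros s hs. destruct (bnd A B H s hs) as (b1&b2&b3&b4&_). rewrite nA1, b3 by auto. ring.
  - intros s hs. destruct (bnd A B H s hs) as (b1&b2&b3&b4&_). rewrite nA2, b4 by auto. ring.
  -
    pose proof (SW s2 t2 s1 t1 ltac:(rl)). unfold Vol in *. lra.
  - pose proof (NE s1 t1 s2 t2 ltac:(rl)). unfold Vol in *. lra.
  -
    assert (h : Vol A s1 s2 t1 t2 - D_M A s1 t1 - D_M A s2 t2 + D_M A s2 t1 >= 0);
    [| unfold Vol in *; lra].
    enough (D_M A s1 t1 + D_M A s2 t2 - Vol A s1 s2 t1 t2 <= D_M A s2 t1) by lra.
    apply (DM_ge A B H); [rl|rl| |].
    + intros s3 t3 Hr. destruct (Rle_dec t3 t2).
      * pose proof (NE s1 t1 s3 t3 ltac:(rl)). pose proof (SW s2 t2 s1 t3 ltac:(rl)).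
        unfold Vol in *; lra.
      * pose proof (NE s1 t1 s3 t2 ltac:(rl)). pose proof (NE s2 t2 s3 t3 ltac:(rl)).
        unfold Vol in *; lra.
    + intros s0 t0 Hr. destruct (Rle_dec s1 s0).
      * pose proof (SW s2 t2 s0 t0 ltac:(rl)). pose proof (NE s1 t1 s0 t2 ltac:(rl)).
        unfold Vol in *; lra.
      * pose proof (SW s1 t1 s0 t0 ltac:(rl)). pose proof (SW s2 t2 s1 t0 ltac:(rl)).
        unfold Vol in *; lra.
  -
    enough (D_M A s1 t1 + D_M A s2 t2 - Vol A s1 s2 t1 t2 <= D_M A s1 t2) by (unfold Vol in *; lra).
    apply (DM_ge A B H); [rl|rl| |].
    + intros s3 t3 Hr. destruct (Rle_dec s3 s2).
      * pose proof (NE s1 t1 s3 t3 ltac:(rl)). pose proof (SW s2 t2 s3 t1 ltac:(rl)).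
        unfold Vol in *; lra.
      * pose proof (NE s1 t1 s2 t3 ltac:(rl)). pose proof (NE s2 t2 s3 t3 ltac:(rl)).
        unfold Vol in *; lra.
    + intros s0 t0 Hr. destruct (Rle_dec t1 t0).
      * pose proof (SW s2 t2 s0 t0 ltac:(rl)). pose proof (NE s1 t1 s2 t0 ltac:(rl)).
        unfold Vol in *; lra.
      * pose proof (SW s1 t1 s0 t0 ltac:(rl)). pose proof (SW s2 t2 s0 t1 ltac:(rl)).
        unfold Vol in *; lra.
  - intros s hs. destruct (bnd A B H s hs) as (_&_&_&_&b1&b2&b3&b4). rewrite gB1, b1 by auto. ring.
  - intros s hs. destruct (bnd A B H s hs) as (_&_&_&_&b1&b2&b3&b4). rewrite gB2, b2 by auto. ring.
  - intros s hs. destruct (bnd A B H s hs) as (_&_&_&_&b1&b2&b3&b4). rewrite nB1, b3 by auto. ring.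
  - intros s hs. destruct (bnd A B H s hs) as (_&_&_&_&b1&b2&b3&b4). rewrite nB2, b4 by auto. ring.
  - intros s hs. rewrite gB1 by auto. reflexivity.
  - intros s hs. rewrite gB2 by auto. reflexivity.
  - intros s hs. rewrite nB1 by auto. reflexivity.
  - intros s hs. rewrite nB2 by auto. reflexivity.
  -
    enough (D_O B s2 t1 + D_O B s1 t2 - Vol B s1 s2 t1 t2 <= D_O B s1 t1) by (unfold Vol in *; lra).
    apply (DO_ge A B H); [rl|rl| |].
    + intros s0 t3 Hr. destruct (Rle_dec t2 t3).
      * pose proof (NW s1 t2 s0 t3 ltac:(rl)). pose proof (NW s2 t1 s0 t2 ltac:(rl)).
        unfold Vol in *; lra.
      * pose proof (NW s2 t1 s0 t3 ltac:(rl)). pose proof (SE s1 t2 s2 t3 ltac:(rl)).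
        unfold Vol in *; lra.
    + intros s3 t0 Hr. destruct (Rle_dec s2 s3).
      * pose proof (SE s2 t1 s3 t0 ltac:(rl)). pose proof (SE s1 t2 s2 t0 ltac:(rl)).
        unfold Vol in *; lra.
      * pose proof (SE s1 t2 s3 t0 ltac:(rl)). pose proof (NW s2 t1 s3 t2 ltac:(rl)).
        unfold Vol in *; lra.
  -
    enough (D_O B s2 t1 + D_O B s1 t2 - Vol B s1 s2 t1 t2 <= D_O B s2 t2) by (unfold Vol in *; lra).
    apply (DO_ge A B H); [rl|rl| |].
    + intros s0 t3 Hr. destruct (Rle_dec s0 s1).
      * pose proof (NW s1 t2 s0 t3 ltac:(rl)). pose proof (NW s2 t1 s1 t3 ltac:(rl)).
        unfold Vol in *; lra.
      * pose proof (NW s2 t1 s0 t3 ltac:(rl)). pose proof (SE s1 t2 s0 t1 ltac:(rl)).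
        unfold Vol in *; lra.
    + intros s3 t0 Hr. destruct (Rle_dec t0 t1).
      * pose proof (SE s2 t1 s3 t0 ltac:(rl)). pose proof (SE s1 t2 s3 t1 ltac:(rl)).
        unfold Vol in *; lra.
      * pose proof (SE s1 t2 s3 t0 ltac:(rl)). pose proof (NW s2 t1 s1 t0 ltac:(rl)).
        unfold Vol in *; lra.
  - pose proof (SE s1 t2 s2 t1 ltac:(rl)). unfold Vol in *. lra.
  - pose proof (NW s2 t1 s1 t2 ltac:(rl)). unfold Vol in *. lra.
  - intros s t hs ht. pose proof (DM_le0 A B H s t hs ht). lra.
  - intros s t hs ht. pose proof (DM_geAB A B H s t hs ht). lra.
  - intros s t hs ht. pose proof (DO_geAB A B H s t hs ht). lra.
  - intros s t hs ht. pose proof (DO_le0 A B H s t hs ht). lra.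
Qed.
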